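(* Let $\delta>0$ and $k,l\in\mathbb{N}$. Then there exists $n_0\in\mathbb{N}$ such that for every $n\ge n_0$ and every subset $\mathcal{A}$ of $[\{1,\dots,n\}]^k$ with $|\mathcal{A}|\ge\delta\binom{n}{k}$, there exists a plegma family $(s_j)_{j=1}^l$ in $[\mathbb{N}]^k$ with $s_j\in\mathcal{A}$ for every $1\le j\le l$.
   Context: $[A]^k$ is the set of $k$-element subsets of $A$, each identified with its increasing enumeration $s(1)<\dots<s(k)$. A finite sequence $(s_j)_{j=1}^l$ in $[\mathbb{N}]^k$ is a plegma family if $s_1(i)<s_2(i)<\dots<s_l(i)$ for every $1\le i\le k$ and $s_l(i)<s_1(i+1)$ for every $1\le i<k$. *)

(* Defs.v *)
From Stdlib Require Import Reals.
From mathcomp Require Import all_boot.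
Set Implicit Arguments. Unset Strict Implicit. Unset Printing Implicit Defensive.

(* Increasing enumeration s(1) < ... < s(k) of a finite set of naturals,
   given as a set of ordinals; s(i) is [nth 0 (incr S) (i-1)]. *)
Definition incr (m : nat) (S : {set 'I_m}) : seq nat :=
  sort leq (map (@nat_of_ord m) (enum S)).

(* A finite sequence f = (s_1,...,s_l) of increasing enumerations of
   k-element subsets of N is a plegma family (0-based indices here):
   - each s_j is a strictly increasing sequence of length k;
   - s_1(i) < s_2(i) < ... < s_l(i) for every i;
   - s_l(i) < s_1(i+1) for every i < k. *)
Definition plegma (k : nat) (f : seq (seq nat)) : Prop :=
  (forall s, s \in f -> size s = k /\ sorted ltn s) /\
  (forall i j, i < k -> j.+1 < size f ->
     nth 0 (nth [::] f j) i < nth 0 (nth [::] f j.+1) i) /\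
  (forall i, i.+1 < k -> 0 < size f ->
     nth 0 (nth [::] f (size f).-1) i < nth 0 (nth [::] f 0) i.+1).

(* Main.v *)
Require Import Defs.
From Stdlib Require Import Reals.
From Stdlib Require Import Lia.
From mathcomp Require Import all_boot.
Set Implicit Arguments. Unset Strict Implicit. Unset Printing Implicit Defensive.

Lemma incr_mem (m : nat) (S : {set 'I_m}) x : (x \in incr S) = [exists y in S, val y == x].
Proof.
rewrite /incr mem_sort; apply/mapP/existsP => [[y Hy ->]|[y /andP[Hy /eqP <-]]].
  by exists y; rewrite -mem_enum Hy eqxx.
by exists y; rewrite ?mem_enum.
Qed.

Lemma incr_sorted (m : nat) (S : {set 'I_m}) : sorted ltn (incr S).
Proof.
rewrite ltn_sorted_uniq_leq /incr sort_uniq sort_sorted ?andbT; last exact: leq_total.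
by rewrite (map_inj_uniq val_inj) enum_uniq.
Qed.

Lemma size_incr (m : nat) (S : {set 'I_m}) : size (incr S) = #|S|.
Proof. by rewrite /incr size_sort size_map cardE. Qed.

Lemma incr_eq (m : nat) (S : {set 'I_m}) s :
  sorted ltn s -> s =i incr S -> incr S = s.
Proof.
move=> Hs Heq; apply: (irr_sorted_eq ltn_trans ltnn) => //; first exact: incr_sorted.

Qed.

Lemma incr_U1 (m : nat) (h : 'I_m) (S : {set 'I_m}) :
  (forall y, y \in S -> h < y) -> incr (h |: S) = val h :: incr S.
Proof.
move=> Hh; apply: incr_eq.
  rewrite /= path_sortedE; last exact: ltn_trans.
  rewrite incr_sorted andbT; apply/allP => x; rewrite incr_mem.
  by case/existsP=> y /andP[Hy /eqP <-]; apply: Hh.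
move=> x; rewrite in_cons !incr_mem; apply/idP/existsP.
  case/orP=> [/eqP ->|/existsP[y /andP[Hy Hx]]].
    by exists h; rewrite setU11 eqxx.
  by exists y; rewrite setU1r.
case=> y /andP[]; rewrite in_setU1 => /orP[/eqP ->|Hy] Hx.
  by rewrite eq_sym Hx.
by apply/orP; right; apply/existsP; exists y; rewrite Hy.
Qed.

Lemma mem_zip (S T : eqType) (s : seq S) (t : seq T) x y :
  (x, y) \in zip s t -> x \in s /\ y \in t.
Proof.
elim: s t => [|a s IH] [|b t] //=.
rewrite in_cons => /orP[/eqP [-> ->]|/IH [H1 H2]].
  by rewrite !inE !eqxx.
by rewrite !inE H1 H2 !orbT.
Qed.

Lemma plegma_cons k (hs : seq nat) (us : seq (seq nat)) :
  plegma k us -> sorted ltn hs -> size hs = size us ->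
  (forall h u x, h \in hs -> u \in us -> x \in u -> h < x) ->
  plegma k.+1 [seq p.1 :: p.2 | p <- zip hs us].
Proof.
move=> [P1 [P2 P3]] Shs Hsz Hlt.
have Hsize : size [seq p.1 :: p.2 | p <- zip hs us] = size us.
  by rewrite size_map size_zip Hsz minnn.
have Hnth : forall j, j < size us ->
  nth [::] [seq p.1 :: p.2 | p <- zip hs us] j = nth 0 hs j :: nth [::] us j.
  move=> j Hj; rewrite (nth_map (0, [::])) ?size_zip ?Hsz ?minnn //.
  by rewrite nth_zip.
split; [|split].
- move=> s /mapP[[h u] /= Hp ->].
  have Hh := mem_zip Hp; case: Hh => Hh Hu.
  case: (P1 u Hu) => Hs1 Hs2; split; first by rewrite /= Hs1.
  rewrite /= path_sortedE; last exact: ltn_trans.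
  by rewrite Hs2 andbT; apply/allP => x Hx; apply: Hlt Hh Hu Hx.
- move=> i j Hi Hj; rewrite Hsize in Hj.
  rewrite !Hnth //; last exact: ltnW.
  case: i Hi => [|i] Hi /=.
    apply: (sorted_ltn_nth ltn_trans 0 Shs); rewrite ?inE ?Hsz //.
    exact: ltnW.
  exact: P2.
- move=> i Hi Hpos; rewrite Hsize in Hpos *.
  rewrite !Hnth //; last by rewrite prednK.
  case: i Hi => [|i] Hi /=.
    have Hu0 : nth [::] us 0 \in us := mem_nth [::] Hpos.
    have [Hk _] := P1 _ Hu0.
    apply: (Hlt _ (nth [::] us 0)) => //; first by rewrite mem_nth // Hsz prednK.
    by apply: mem_nth; rewrite Hk.
  exact: P3.
Qed.
Lemma card_interval N a n : #|[set x : 'I_N.+1 | a <= x < a + n]| <= n.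
Proof.
rewrite -[n in _ <= n]card_ord -cardsT.
apply: (leq_trans _ (leq_imset_card (fun i : 'I_n => (inord (a + i) : 'I_N.+1)) [set: 'I_n])).
apply: subset_leq_card; apply/subsetP => x; rewrite inE => /andP[H1 H2].
apply/imsetP; have Hi : x - a < n by rewrite ltn_subLR.
exists (Ordinal Hi); first by rewrite inE.
by apply: val_inj; rewrite /= subnKC // inordK.
Qed.

Lemma subsets_card (T : finType) (S : {set T}) j :
  #|[set e : {set T} | (e \subset S) && (#|e| == j)]| <= #|S| ^ j.
Proof.
elim: j => [|j IH].
  rewrite expn0 -(cards1 (set0 : {set T})).
  apply: subset_leq_card; apply/subsetP => e; rewrite !inE => /andP[_ /eqP He].
  by rewrite (cards0_eq He).
set K := [set e : {set T} | (e \subset S) && (#|e| == j)].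
apply: (leq_trans _ (_ : #|setX S K| <= _)); last by rewrite cardsX expnS leq_mul2l IH orbT.
apply: (leq_trans _ (leq_imset_card (fun p => p.1 |: p.2) _)).
apply: subset_leq_card; apply/subsetP => e; rewrite inE => /andP[HS /eqP He].
have : 0 < #|e| by rewrite He.
case/card_gt0P => x Hx.
apply/imsetP; exists (x, e :\ x); last by rewrite /= setD1K.
rewrite inE /= (subsetP HS _ Hx) /= inE.
rewrite (subset_trans (subsetDl _ _) HS) /=.
by move: He; rewrite (cardsD1 x) Hx add1n => -[->].
Qed.

Lemma card_bigcup_le (I T : finType) (P : pred I) (F : I -> {set T}) :
  #|\bigcup_(i | P i) F i| <= \sum_(i | P i) #|F i|.
Proof.
apply: (big_ind2 (fun (X : {set T}) n => #|X| <= n)) => //.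
  by rewrite cards0.
move=> X1 n1 X2 n2 H1 H2; apply: leq_trans (leq_card_setU _ _) _.
exact: leq_add.
Qed.

Lemma pigeon (T U : finType) (S : {set T}) (F : T -> U) (R : {set U}) (u0 : U) :
  (forall x, x \in S -> F x \in R) ->
  exists u, #|S| <= #|R| * #|[set x in S | F x == u]|.
Proof.
move=> HF.
have [Hs|Hs] := posnP #|S|; first by exists u0; rewrite Hs.
have Himg : 0 < #|F @: S|.
  case/card_gt0P: Hs => x Hx; apply/card_gt0P; exists (F x); exact: imset_f.
have [u Hu Hmax] := eq_bigmax_cond (fun u => #|[set x in S | F x == u]|) Himg.
exists u; rewrite -sum1_card (partition_big_imset F).
apply: (leq_trans (_ : _ <= \sum_(j in F @: S) #|[set x in S | F x == u]|)).
  apply: leq_sum => j Hj; rewrite sum1_card -Hmax.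
  have := @leq_bigmax_cond _ (mem (F @: S)) (fun u => #|[set x in S | F x == u]|) j Hj.
  by rewrite cardsE.
rewrite (eq_bigl (mem (F @: S))) // sum_nat_const leq_mul2r; apply/orP; right.
apply: subset_leq_card; apply/subsetP => y /imsetP [x Hx ->]; exact: HF.
Qed.

Lemma pow_root x y D j : 0 < D -> x ^ j.+1 <= D * y ^ j.+1 -> x <= D * y.
Proof.
move=> HD H; rewrite leqNgt; apply/negP => Hlt.
have : (D * y) ^ j.+1 < x ^ j.+1 by rewrite ltn_exp2r.
rewrite ltnNge => /negP; apply; apply: leq_trans H _.
by rewrite expnMn leq_mul2r -{1}(expn1 D) leq_pexp2l // orbT.
Qed.

Ltac ssrlia :=
  try (apply/leP); try (apply/ltP);
  repeat match goal with
  | H : is_true (_ <= _) |- _ => move/leP: H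
  | H : is_true (_ < _) |- _ => move/ltP: H
  end;
  rewrite -?plusE -?multE -?minusE; intros; lia.

Lemma plegma_nil k : plegma k [::].
Proof. by split; [|split]. Qed.

Lemma map_incr_zip N (hs : seq 'I_N) (g : seq {set 'I_N}) :
  (forall h t y, h \in hs -> t \in g -> y \in t -> h < y) ->
  map (@incr N) [seq p.1 |: p.2 | p <- zip hs g] =
  [seq p.1 :: p.2 | p <- zip (map val hs) (map (@incr N) g)].
Proof.
elim: hs g => [|h hs IH] [|t g] //= H.
rewrite incr_U1; last by move=> y Hy; apply: (H h t y); rewrite ?mem_head.
rewrite IH // => h' t' y Hh Ht Hy; apply: (H h' t' y) => //; by rewrite in_cons ?Hh ?Ht orbT.
Qed.

Lemma sorted_prefix N (H : {set 'I_N}) l :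
  let hs := take l (sort (fun x y : 'I_N => x <= y) (enum H)) in
  [/\ map val hs = take l (incr H), sorted ltn (map val hs),
      (l <= #|H| -> size hs = l) & (forall h, h \in hs -> h \in H)].
Proof.
move=> hs; have E : map val hs = take l (incr H).
  by rewrite /hs map_take /incr (@map_sort _ _ val (fun x y : 'I_N => x <= y) leq).
split => //.
- by rewrite E; apply: take_sorted; apply: incr_sorted.
- by move=> Hl; rewrite size_takel // size_sort -cardE.
- by move=> h /mem_take; rewrite mem_sort mem_enum.
Qed.

Definition G N a n : {set 'I_N.+1} := [set x : 'I_N.+1 | a <= x < a + n].

Definition Q k := forall D l, exists W0, forall W, W0 <= W ->
  forall N a n (A : {set {set 'I_N.+1}}), n <= W -> W <= D * n ->
  (forall e, e \in A -> #|e| = k.+1 /\ e \subset G N a n) ->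
  W ^ k * n <= D * #|A| ->
  exists f : seq {set 'I_N.+1},
    size f = l /\ all (fun s => s \in A) f /\ plegma k.+1 (map (@incr N.+1) f).

Lemma incr0 m : incr (set0 : {set 'I_m}) = [::].
Proof. by apply: size0nil; rewrite size_incr cards0. Qed.

Lemma plegma0 l : plegma 0 (nseq l [::]).
Proof.
split; [|split] => //.
by move=> s; rewrite mem_nseq => /andP[_ /eqP ->].
Qed.

Lemma Q0 : Q 0.
Proof.
move=> D l; exists (D * D * l).+1 => W HW N a n A Hn HWn HA Hden.
rewrite expn0 mul1n in Hden.
set X := [set x : 'I_N.+1 | [set x] \in A].
have HAX : #|A| <= #|X|.
  apply: leq_trans (leq_imset_card (fun x => [set x]) X).
  apply: subset_leq_card; apply/subsetP => e He.
  have [He1 _] := HA e He.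
  have /cards1P [x Hx] : #|e| == 1 by rewrite He1.
  by apply/imsetP; exists x => //; rewrite inE -Hx.
have Hl : l <= #|X|.
  have : D * D * l < D * D * #|A|.
    apply: leq_trans HW (leq_trans HWn _).
    by rewrite -mulnA leq_mul2l Hden orbT.
  by rewrite ltn_mul2l => /andP[_ H]; apply: leq_trans (ltnW H) HAX.
have [E S Hsz Hmem] := sorted_prefix X l.
set hs := take l _ in E S Hsz Hmem.
exists [seq p.1 |: p.2 | p <- zip hs (nseq l set0)].
split; [|split].
- by rewrite size_map size_zip size_nseq Hsz // minnn.
- apply/allP => s /mapP [[h t] /mem_zip [Hh Ht] ->] /=.
  move: Ht; rewrite mem_nseq => /andP[_ /eqP ->]; rewrite setU0.
  by have := Hmem h Hh; rewrite inE.
- rewrite map_incr_zip; last first.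
    by move=> h t y _; rewrite mem_nseq => /andP[_ /eqP ->]; rewrite inE.
  rewrite map_nseq incr0; apply: plegma_cons => //.
  + exact: plegma0.
  + by rewrite size_map size_nseq Hsz.
  + by move=> h u x _; rewrite mem_nseq => /andP[_ /eqP ->].
Qed.

Lemma arith1 (D l X g : nat) : 2 * D * l * X <= D * (l * X + 2 * D * l * g) ->
  D * l * X <= D * l * (2 * D * g).
Proof. move=> /leP H; apply/leP; rewrite -!multE -!plusE in H *; nia. Qed.

Lemma Qstep k : Q k -> Q k.+1.
Proof.
move=> IH D [|l'].
  by exists 0 => W _ N a n A _ _ _ _; exists [::]; split => //; split => //.
set l := l'.+1.
set m := 2 * D * l.
set D' := 2 ^ m * (2 * D).
have [W1 HW1] := IH D' l.
exists (maxn W1 (D * m).+1) => W; rewrite geq_max => /andP[HW1W HWm].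
move=> N a n; elim/ltn_ind: n a => n IHn a A Hn HWn HA Hden.
have HD : 0 < D.
  rewrite lt0n; apply/eqP => D0; move: HWn HWm; rewrite D0 !mul0n => H1 H2.
  by have := leq_trans H2 H1.
have Hmn : m < n.
  have : D * m < D * n := leq_trans HWm HWn.
  by rewrite ltn_mul2l => /andP[].
have Hm0 : 0 < m by rewrite /m !muln_gt0 HD.
set B := G N a m.
set C := [set e : {set 'I_N.+1} | e :&: B != set0].
set A1 := A :&: C.
set A2 := A :\: C.
have Hsplit : #|A1| + #|A2| = #|A| := cardsID C A.
set X := W ^ k.+1.
have HXpos : 0 < X by rewrite expn_gt0 (leq_trans _ HWm).
case: (leqP (m * X) (D * #|A1|)) => Hcase; last first.
  have HA2sub : forall e, e \in A2 -> #|e| = k.+2 /\ e \subset G N (a + m) (n - m).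
    move=> e; rewrite inE => /andP[He HeA].
    have [Hc Hsub] := HA e HeA; split => //.
    apply/subsetP => x Hx; have := subsetP Hsub x Hx; rewrite !inE => /andP[H1 H2].
    have HxB : x \notin B.
      apply/negP => HxB; move: He; rewrite inE negbK => /eqP He0.
      have : x \in e :&: B by rewrite inE Hx HxB.
      by rewrite He0 inE.
    move: HxB; rewrite inE H1 /= -leqNgt => ->.
    by rewrite -addnA subnKC // ltnW.
  have Hden2 : X * (n - m) <= D * #|A2|.
    rewrite mulnBr; rewrite -Hsplit mulnDr in Hden; rewrite [m * X]mulnC in Hcase.
    move: Hden Hcase; move: (X * n) (X * m) (D * #|A1|) (D * #|A2|).
    clear; move=> x1 x2 x3 x4 H1 H2; ssrlia.
  have HA2card : #|A2| <= (n - m) ^ k.+2.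
    apply: (@leq_trans #|[set e : {set 'I_N.+1} | (e \subset G N (a+m) (n-m)) && (#|e| == k.+2)]|).
      apply: subset_leq_card; apply/subsetP => e He; have [H1 H2] := HA2sub e He.
      by rewrite inE H2 H1 eqxx.
    apply: leq_trans (subsets_card _ _) _; rewrite leq_exp2r //; exact: card_interval.
  have HWnm : W <= D * (n - m).
    apply: (pow_root (j := k)) HD _.
    have : X * (n - m) <= D * (n - m) ^ k.+1 * (n - m).
      apply: leq_trans Hden2 _; by rewrite -mulnA -expnSr leq_mul2l HA2card orbT.
    move=> H; rewrite -(@leq_pmul2r (n - m)) ?subn_gt0 //; exact: H.
  have Hlt : n - m < n by rewrite ltn_subrL Hm0 (leq_ltn_trans _ Hmn).
  have [f [Hf1 [Hf2 Hf3]]] :=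
    IHn (n - m) Hlt (a + m) A2 (leq_trans (leq_subr _ _) Hn) HWnm HA2sub Hden2.
  exists f; split => //; split => //.
  apply/allP => s Hs; have := allP Hf2 s Hs; rewrite inE => /andP[_ ->] //.
set K := [set t : {set 'I_N.+1} | (t \subset G N a n) && (#|t| == k.+1)].
pose Nf t := [set h in B | (h |: t \in A) && [forall y in t, h < y]].
have HA1 : A1 \subset \bigcup_(t in K) ((fun h => h |: t) @: Nf t).
  apply/subsetP => e; rewrite inE => /andP[HeA HeC].
  rewrite inE in HeC; case/set0Pn: HeC => x0; rewrite inE => /andP[Hx0e Hx0B].
  have [Hc Hsub] := HA e HeA.
  case: (arg_minnP (fun h : 'I_N.+1 => val h) Hx0e) => h Hhe0 Hmin.
  have Hhe : h \in e := Hhe0.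
  apply/bigcupP; exists (e :\ h).
    rewrite inE (subset_trans (subsetDl _ _) Hsub) /=.
    by move: Hc; rewrite (cardsD1 h) Hhe add1n => -[->].
  apply/imsetP; exists h; last by rewrite setD1K.
  rewrite inE setD1K // HeA /=; apply/andP; split.
    have := subsetP Hsub h Hhe; rewrite !inE => /andP[-> _] /=.
    apply: leq_ltn_trans (Hmin _ Hx0e) _.
    by move: Hx0B; rewrite inE => /andP[_ ->].
  apply/forall_inP => y; rewrite inE => /andP[Hyh Hye].
  rewrite ltn_neqAle (Hmin _ Hye) andbT; apply/eqP => E.
  by move: Hyh; rewrite (val_inj E) inE eqxx.
have HA1le : #|A1| <= \sum_(t in K) #|Nf t|.
  apply: leq_trans (subset_leq_card HA1) _; apply: leq_trans (card_bigcup_le _ _) _.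
  by apply: leq_sum => t _; exact: leq_imset_card.
set Gd := [set t in K | l <= #|Nf t|].
have HNfB : forall t, Nf t \subset B.
  by move=> t; apply/subsetP => h; rewrite inE => /andP[-> _].
have HNfm : forall t, #|Nf t| <= m.
  by move=> t; apply: leq_trans (subset_leq_card (HNfB t)) (card_interval _ _ _).
have Hsum : \sum_(t in K) #|Nf t| <= l * #|K| + m * #|Gd|.
  rewrite (bigID (fun t => l <= #|Nf t|)) /= addnC; apply: leq_add.
    rewrite big_mkcondr /=.
    apply: leq_trans (_ : \sum_(t in K) l <= _); last by rewrite sum_nat_const mulnC.
    apply: leq_sum => t _; case: ifP => // Hg.
    by apply: ltnW; rewrite ltnNge; apply/negP => H; move/negP: Hg; apply.
  apply: leq_trans (_ : \sum_(t | (t \in K) && (l <= #|Nf t|)) m <= _).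
    by apply: leq_sum => t _; exact: HNfm.
  rewrite mulnC -sum_nat_const; apply: eq_leq; apply: eq_bigl => t.
  by rewrite /Gd inE.
have HKc : #|K| <= X.
  apply: leq_trans (subsets_card _ _) _; rewrite leq_exp2r //.
  exact: leq_trans (card_interval _ _ _) Hn.
have HGd : X <= 2 * D * #|Gd|.
  have H1 : m * X <= D * (l * X + m * #|Gd|).
    apply: leq_trans Hcase _; rewrite leq_mul2l; apply/orP; right.
    apply: leq_trans HA1le (leq_trans Hsum _).
    by rewrite leq_add2r leq_mul2l HKc orbT.
  have Hpos : 0 < D * l by rewrite muln_gt0 HD.
  rewrite -(leq_pmul2l Hpos).
  by move: H1; rewrite /m; apply: arith1.
have [t _|H HH] := @pigeon _ _ Gd Nf (powerset B) set0.
  by rewrite powersetE.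
set BH := [set t in Gd | Nf t == H] in HH.
have Hpow : #|powerset B| <= 2 ^ m.
  by rewrite card_powerset leq_exp2l //; exact: card_interval.
have HDD : 2 * D * #|Gd| <= D' * #|BH|.
  rewrite /D' [2 ^ m * _]mulnC -(mulnA (2 * D)) leq_mul2l; apply/orP; right.
  by apply: leq_trans HH _; rewrite leq_mul2r Hpow orbT.
have HXBH : X <= D' * #|BH| := leq_trans HGd HDD.
have HBH0 : 0 < #|BH|.
  rewrite lt0n; apply/eqP => E; move: HXBH; rewrite E muln0 leqn0 => /eqP X0.
  by move: HXpos; rewrite X0.
case/card_gt0P: HBH0 => t0; rewrite inE => /andP[Ht0Gd /eqP HNt0].
have HlH : l <= #|H| by move: Ht0Gd; rewrite inE -HNt0 => /andP[_].
have HDD' : D <= D'.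
  apply: leq_trans (leq_pmull D (_ : 0 < 2)) _ => //.
  by apply: leq_pmull; rewrite expn_gt0.
have HBHsub : forall t, t \in BH -> #|t| = k.+1 /\ t \subset G N a n.
  move=> t; rewrite inE => /andP[]; rewrite inE => /andP[]; rewrite inE.
  by case/andP => H1 /eqP H2 _ _.
have HBHden : W ^ k * n <= D' * #|BH|.
  by apply: leq_trans HXBH; rewrite /X expnSr leq_mul2l Hn orbT.
have HWD' : W <= D' * n.
  by apply: leq_trans HWn _; rewrite leq_mul2r HDD' orbT.
have [g [Hg1 [Hg2 Hg3]]] := HW1 W HW1W N a n BH Hn HWD' HBHsub HBHden.
have Hpair : forall h t, h \in H -> t \in BH ->
    (h |: t \in A) /\ (forall y, y \in t -> h < y).
  move=> h t Hh; rewrite inE => /andP[_ /eqP Ht]; rewrite -Ht inE in Hh.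
  case/and3P: Hh => _ HA' Hall; split => // y Hy.
  by move/forall_inP: Hall; apply.
have [E S Hsz Hmem] := sorted_prefix H l.
set hs := take l _ in E S Hsz Hmem.
have Hord : forall h t y, h \in hs -> t \in g -> y \in t -> h < y.
  move=> h t y Hh Ht Hy; have [_ ] := Hpair h t (Hmem h Hh) (allP Hg2 t Ht).
  by apply.
exists [seq p.1 |: p.2 | p <- zip hs g].
split; [|split].
- by rewrite size_map size_zip Hsz // Hg1 minnn.
- apply/allP => s /mapP [[h t] /mem_zip [Hh Ht] ->] /=.
  by have [] := Hpair h t (Hmem h Hh) (allP Hg2 t Ht).
- rewrite map_incr_zip //; apply: plegma_cons => //.
  + by rewrite !size_map Hsz.
  + move=> h u x /mapP [h' Hh' ->] /mapP [t Ht ->]; rewrite incr_mem.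
    by case/exists_inP => y Hy /eqP <-; apply: Hord Hh' Ht Hy.
Qed.

Lemma Qall k : Q k.
Proof. elim: k => [|k IH]; [exact: Q0 | exact: Qstep]. Qed.

Lemma pow_ffact k n : 2 * k <= n -> n ^ k <= 2 ^ k * n ^_ k.
Proof.
elim: k => [|k IH] H; first by rewrite expn0 ffactn0.
have H' : 2 * k <= n by apply: leq_trans H; rewrite leq_mul2l leqnSn orbT.
rewrite ffactnSr [n ^ k.+1]expnSr [2 ^ k.+1]expnS.
apply: (@leq_trans (2 ^ k * n ^_ k * n)); first by rewrite leq_mul2r IH ?orbT.
rewrite -mulnA [2 * 2 ^ k]mulnC -(mulnA (2 ^ k)) leq_mul2l; apply/orP; right.
rewrite mulnCA leq_mul2l; apply/orP; right.
apply/leP; move/leP: H; rewrite -!multE -!minusE; lia.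
Qed.

Lemma density_nat (delta : R) (D c a : nat) :
  Rlt (Rinv (INR D)) delta -> (0 < D)%coq_nat ->
  Rle (Rmult delta (INR c)) (INR a) -> c <= D * a.
Proof.
move=> H1 H2 H3.
have HD : Rlt 0 (INR D) by apply: lt_0_INR.
apply/leP; apply: INR_le; rewrite mult_INR.
have Hc : Rle 0 (INR c) by apply: pos_INR.
have H4 : Rle (Rmult (Rinv (INR D)) (INR c)) (INR a).
  apply: Rle_trans H3; apply: Rmult_le_compat_r => //; exact: Rlt_le.
have := Rmult_le_compat_l (INR D) _ _ (Rlt_le _ _ HD) H4.
rewrite -Rmult_assoc Rinv_r; first by rewrite Rmult_1_l.
apply: not_0_INR; lia.
Qed.

Unset Implicit Arguments.
Set Strict Implicit.

Theorem mainTheorem13 (delta : R) (k l : nat) :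
  Rlt 0 delta ->
  exists n0 : nat, forall n : nat, n0 <= n ->
    forall A : {set {set 'I_n.+1}},
      (forall s, s \in A -> #|s| = k /\ ord0 \notin s) ->
      Rle (Rmult delta (INR 'C(n, k))) (INR #|A|) ->
      exists f : seq {set 'I_n.+1},
        size f = l /\ all (fun s => s \in A) f /\ plegma k (map (@incr n.+1) f).
Proof.
move=> Hd; have [D [HD1 HD0]] := archimed_cor1 delta Hd.
have HDp : 0 < D by apply/ltP.
case: k => [|k].
  exists 0 => n _ A HA Hden.
  have := density_nat HD1 HD0 Hden; rewrite bin0 => H1.
  have : 0 < #|A|.
    by rewrite lt0n; apply/eqP => E; move: H1; rewrite E muln0.
  case/card_gt0P => e He.
  have He0 : e = set0 by apply: cards0_eq; case: (HA e He).
  exists (nseq l e); split; first by rewrite size_nseq.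
  split; first by apply/allP => s; rewrite mem_nseq => /andP[_ /eqP ->].
  by rewrite map_nseq He0 incr0; exact: plegma0.
have [W0 HW0] := Qall k (2 ^ k.+1 * k.+1`! * D) l.
exists (maxn W0 (2 * k.+1)) => n; rewrite geq_max => /andP[HW0n Hkn] A HA Hden.
have H1 := density_nat HD1 HD0 Hden.
have HD'' : 0 < 2 ^ k.+1 * k.+1`! * D by rewrite !muln_gt0 expn_gt0 fact_gt0 HDp.
apply: (HW0 n HW0n n 1 n A (leqnn n) (leq_pmull _ HD'')).
- move=> e He; have [Hc H0] := HA e He; split => //.
  apply/subsetP => x Hx; rewrite inE ltn_ord andbT lt0n.
  apply/eqP => x0; have Ex : x = ord0 by apply: val_inj.
  by move: H0; rewrite -Ex Hx.
- rewrite -expnSr; apply: leq_trans (pow_ffact Hkn) _.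
  have E : 2 ^ k.+1 * k.+1`! * D * #|A| = 2 ^ k.+1 * (k.+1`! * (D * #|A|)).
    by rewrite !mulnA.
  rewrite E -bin_ffact leq_mul2l; apply/orP; right.
  by rewrite [X in X <= _]mulnC leq_mul2l H1 orbT.
Qed.
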